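(* For every positive integer $n$, the Alon-Tarsi number of the complete bipartite graph $K_{n,n}$ equals $1+\left\lceil \frac{n}{2}\right\rceil$.
   Context: For a graph $G$ with vertices ordered $x_1,\dots,x_N$ (treated as variables over a field of characteristic $0$), the graph polynomial is $P_G=\prod_{i<j,\ x_ix_j\in E(G)}(x_i-x_j)$. The Alon-Tarsi number of $G$ is $1+\min\max_k i_k$, where the minimum is over all monomials $x_1^{i_1}\cdots x_N^{i_N}$ with nonzero coefficient in $P_G$. *)

(* Defs.v *)
From mathcomp Require Import all_boot all_order all_algebra.
From mathcomp Require Import mpoly.
Set Implicit Arguments. Unset Strict Implicit. Unset Printing Implicit Defensive.
Import GRing.Theory.
Local Open Scope ring_scope.

Definition simple_graph (N : nat) (e : rel 'I_N) : Prop :=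
  irreflexive e /\ ssrbool.symmetric e.

Definition graph_poly (F : fieldType) (N : nat) (e : rel 'I_N) : {mpoly F[N]} :=
  \prod_(i < N) \prod_(j < N | (i < j)%N && e i j) ('X_i - 'X_j).

Definition mon_max (N : nat) (m : 'X_{1..N}) : nat := \max_(k < N) m k.

(* The default value of the
   min over an empty support is irrelevant since P_G <> 0 in characteristic 0. *)
Definition alon_tarsi (F : fieldType) (N : nat) (e : rel 'I_N) : nat :=
  let P := graph_poly F e in
  (1 + \big[minn/msize P]_(m <- msupp P) mon_max m)%N.

(* Complete bipartite graph K_{n,n}: vertices 'I_(n+n), the first n form one
   side, the last n the other side. *)
Definition Knn_rel (n : nat) : rel 'I_(n + n) :=
  fun i j => (i < n)%N != (j < n)%N.
Arguments Knn_rel n i j : clear implicits.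

(* Main.v *)
Require Import Defs.
From mathcomp Require Import all_boot all_order all_algebra.
From mathcomp Require Import mpoly.
From mathcomp Require Import zify.
Set Implicit Arguments. Unset Strict Implicit. Unset Printing Implicit Defensive.
Import GRing.Theory.
Local Open Scope ring_scope.

Section S.
Variables (F : fieldType) (n : nat).
Local Notation T := ('I_n * 'I_n)%type.
Local Notation l := (@lshift n n).
Local Notation r := (@rshift n n).

Lemma gp_pairs : graph_poly F (Knn_rel n) =
  \prod_(p : T) ('X_(l p.1) - 'X_(r p.2)).
Proof.
rewrite /graph_poly big_split_ord /= [X in _ * X]big1 ?mulr1; last first.
  move=> i _; apply: big1 => j /andP[lt]; rewrite /Knn_rel /=.
  have := ltn_ord j; move: lt.
  by case: (ltnP (n+i) n) => //=; case: (ltnP j n) => //=; lia.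
rewrite -(pair_big xpredT xpredT (fun a b => 'X_(l a) - 'X_(r b))) /=.
apply: eq_bigr => i _.
rewrite big_split_ord /= big1 ?mul1r; last first.
  by move=> j /andP[_]; rewrite /Knn_rel /= !ltn_ord.
apply: eq_bigl => j /=; rewrite /Knn_rel /= ltn_ord /=.
have := ltn_ord i; have:= ltn_ord j.
case: (ltnP (n+j) n) => /=; lia.
Qed.

Definition gsel (f : {ffun T -> bool}) (p : T) : 'I_(n + n) :=
  if f p then r p.2 else l p.1.
Definition mon (f : {ffun T -> bool}) : 'X_{1..n + n} :=
  (\sum_(p : T) U_(gsel f p))%MM.
Definition sgn (f : {ffun T -> bool}) : F :=
  \prod_(p : T) (if f p then -1 else 1).

Lemma gp_expand : graph_poly F (Knn_rel n) =
  \sum_(f : {ffun T -> bool}) sgn f *: 'X_[mon f].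
Proof.
rewrite gp_pairs.
rewrite (eq_bigr (fun p => \sum_(c : bool) (if c then -1 else 1) *: 'X_(if c then r p.2 else l p.1))); last first.
  by move=> p _; rewrite big_bool /= scaleN1r scale1r addrC.
rewrite bigA_distr_bigA /=; apply: eq_bigr => f _.
rewrite scaler_prod /mon; congr (_ *: _).
rewrite (big_morph _ (@mpolyXD _ _) (@mpolyX0 _ _)).
by apply: eq_bigr => p _; rewrite /gsel; case: (f p).
Qed.

Lemma lr_neq a b : (l a == r b) = false.
Proof. apply/eqP => /(congr1 val) /=; have := ltn_ord a; lia. Qed.

Lemma mon_E f k : mon f k = (\sum_(p : T) (gsel f p == k))%N.
Proof. by rewrite /mon mnm_sumE; apply: eq_bigr => p _; rewrite mnm1E. Qed.

Lemma mon_l f i : mon f (l i) = (\sum_(j < n) ~~ f (i, j))%N.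
Proof.
rewrite mon_E (eq_bigr (fun p : T => nat_of_bool (gsel f (p.1, p.2) == l i))); last by case.
rewrite -(pair_bigA _ (fun a b => nat_of_bool (gsel f (a, b) == l i))) /=.
rewrite (bigD1 (F := fun a => (\sum_(b < n) nat_of_bool (gsel f (a, b) == l i))%N) i) //= [X in (_ + X)%N]big1 ?addn0; last first.
  move=> a ai; apply: big1 => b _; rewrite /gsel /=; case: (f _) => /=.
    by rewrite eq_sym lr_neq.
  by apply/eqP; rewrite eqb0; apply/eqP => /lshift_inj; apply/eqP.
apply: eq_bigr => b _; rewrite /gsel /=; case: (f _) => /=.
  by rewrite eq_sym lr_neq.
by rewrite eqxx.
Qed.

Lemma mon_r f j : mon f (r j) = (\sum_(i < n) f (i, j))%N.
Proof.
rewrite mon_E (eq_bigr (fun p : T => nat_of_bool (gsel f (p.1, p.2) == r j))); last by case.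
rewrite -(pair_bigA _ (fun a b => nat_of_bool (gsel f (a, b) == r j))) /=.
rewrite exchange_big /= (bigD1 (F := fun b => (\sum_(a < n) nat_of_bool (gsel f (a, b) == r j))%N) j) //= [X in (_ + X)%N]big1 ?addn0; last first.
  move=> b bj; apply: big1 => a _; rewrite /gsel /=; case: (f _) => /=.
    by apply/eqP; rewrite eqb0; apply/eqP => /rshift_inj; apply/eqP.
  by rewrite lr_neq.
apply: eq_bigr => a _; rewrite /gsel /=; case: (f _) => /=.
  by rewrite eqxx.
by rewrite lr_neq.
Qed.

Lemma sgn_mon f : sgn f = (-1) ^+ (\sum_(j < n) mon f (r j))%N.
Proof.
rewrite /sgn (eq_bigr (fun p => (-1) ^+ (f p : nat))); last by move=> p _; case: (f p).
rewrite prodrXr; congr (_ ^+ _).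
under [RHS]eq_bigr do rewrite mon_r.
rewrite exchange_big /= pair_bigA /=.
by apply: eq_bigr => -[a b].
Qed.

Lemma mdeg_mon f : mdeg (mon f) = (n * n)%N.
Proof.
rewrite /mon mdeg_sum (eq_bigr (fun _ => 1%N)); last first.
  by move=> p _; rewrite mdeg1.
by rewrite sum1_card card_prod card_ord.
Qed.

Lemma mcoeff_gp m : mcoeff m (graph_poly F (Knn_rel n)) =
  \sum_(f : {ffun T -> bool}) sgn f * (mon f == m)%:R.
Proof.
rewrite gp_expand raddf_sum /=; apply: eq_bigr => f _.
by rewrite mcoeffZ mcoeffX.
Qed.

Lemma supp_deg m : m \in msupp (graph_poly F (Knn_rel n)) -> mdeg m = (n * n)%N.
Proof.
rewrite mcoeff_msupp mcoeff_gp.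
case: (pickP (fun f => mon f == m)) => [f /eqP <- | none]; first by rewrite mdeg_mon.
by rewrite big1 ?eqxx // => f _; rewrite none mulr0.
Qed.

Lemma supp_witness (charF0 : [pchar F]%R =i pred0) f0 :
  mon f0 \in msupp (graph_poly F (Knn_rel n)).
Proof.
rewrite mcoeff_msupp mcoeff_gp.
set m := mon f0; set K := (\sum_(j < n) m (r j))%N.
rewrite (eq_bigr (fun f => (-1) ^+ K * (mon f == m)%:R)); last first.
  move=> f _; case: eqP => [e|]; last by rewrite !mulr0.
  by rewrite sgn_mon e.
rewrite -mulr_sumr -natr_sum mulf_neq0 //.
  by rewrite expf_neq0 // oppr_eq0 oner_eq0.
move/pcharf0P: charF0 => ->.
rewrite -lt0n (bigD1 f0) //= eqxx //.
Qed.
End S.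

Lemma cnt_lt N u : (\sum_(k < N) (k < u)%N)%N = minn u N.
Proof.
rewrite -(big_mkord xpredT (fun k => nat_of_bool (k < u)%N)).
elim: N => [|N IH]; first by rewrite big_nil; lia.
rewrite big_nat_recr //= IH; by case: (ltnP N u) => /= h; lia.
Qed.

Lemma cnt_ge N u : (\sum_(k < N) ~~ (k < u)%N)%N = (N - u)%N.
Proof.
rewrite -(big_mkord xpredT (fun k => nat_of_bool (~~ (k < u)%N))).
elim: N => [|N IH]; first by rewrite big_nil.
rewrite big_nat_recr //= IH; by case: (ltnP N u) => /= h; lia.
Qed.

Lemma test_lia n M : (n <= M.*2)%N -> (uphalf n <= M)%N.
Proof. rewrite uphalfE -divn2. lia. Qed.

Lemma bigmin_le (I : eqType) (s : seq I) (x : nat) (G : I -> nat) m0 :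
  m0 \in s -> (\big[minn/x]_(m <- s) G m <= G m0)%N.
Proof.
elim: s => [|a s IH] //; rewrite in_cons big_cons => /orP[/eqP <-|h].
  exact: geq_minl.
exact: leq_trans (geq_minr _ _) (IH h).
Qed.

Section W.
Variable n' : nat.
Local Notation n := n'.+1.
Local Notation T := ('I_n * 'I_n)%type.
Local Notation l := (@lshift n n).
Local Notation r := (@rshift n n).

Definition f0 : {ffun T -> bool} := [ffun p : T => (val (p.1 + p.2)%R < uphalf n)%N].

Lemma f0_max : (mon_max (mon f0) <= uphalf n)%N.
Proof.
apply/bigmax_leqP => k _.
case: (splitP k) => [i ki | j kj].
- have -> : k = l i by apply: val_inj.
  rewrite mon_l.
  have -> : (\sum_(j < n) ~~ f0 (i, j))%N = (\sum_(k < n) ~~ (val k < uphalf n)%N)%N.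
    by rewrite [RHS](reindex_inj (addrI i)); apply: eq_bigr => j _; rewrite ffunE.
  rewrite cnt_ge uphalfE; lia.
- have -> : k = r j by apply: val_inj.
  rewrite mon_r.
  have -> : (\sum_(i < n) f0 (i, j))%N = (\sum_(k < n) (val k < uphalf n)%N)%N.
    by rewrite [RHS](reindex_inj (addIr j)); apply: eq_bigr => i _; rewrite ffunE.
  rewrite cnt_lt; lia.
Qed.
End W.

Theorem mainTheorem3 (F : fieldType) (charF0 : [pchar F]%R =i pred0) (n : nat) :
  (0 < n)%N ->
  alon_tarsi F (Knn_rel n) = (1 + uphalf n)%N.
Proof.
case: n => [|n'] // _.
rewrite /alon_tarsi /=; congr (1 + _)%N.
set P := graph_poly F (Knn_rel n'.+1).
have m0P : mon (f0 n') \in msupp P by apply: supp_witness.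
apply/eqP; rewrite eqn_leq; apply/andP; split.
  exact: leq_trans (bigmin_le _ _ m0P) (f0_max n').
rewrite big_seq; apply: (big_ind (fun v => uphalf n'.+1 <= v)%N).
- apply: leq_trans (msize_mdeg_lt m0P).
  rewrite (supp_deg m0P) uphalfE -divn2; nia.
- by move=> a b ha hb; rewrite leq_min ha hb.
- move=> m mP.
  have hd := supp_deg mP.
  have : (n'.+1 * n'.+1 <= n'.+1 * (mon_max m).*2)%N.
    have hs : (\sum_(k < n'.+1 + n'.+1) m k <= #|'I_(n'.+1 + n'.+1)| * mon_max m)%N.
      by rewrite -sum_nat_const; apply: leq_sum => k _; apply: leq_bigmax.
    rewrite card_ord -mdegE hd in hs.
    apply: leq_trans hs _; rewrite -addnn mulnDl mulnDr; lia.
  rewrite leq_pmul2l // => h; exact: test_lia.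
Qed.
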